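(* Let $R$ be a ring such that for every $x\in R$ there exists an integer $n=n(x)\ge 2$ with $xRx=x^{n}Rx^{n}$. Then $R$ is feckly clean.
   Context: Rings are associative with identity, not necessarily commutative; $J(R)$ is the Jacobson radical. An element $u\in R$ is full if $RuR=R$. An element $a\in R$ is feckly clean if there exist $e\in R$ and a full element $u\in R$ with $a=e+u$ and $eR(1-e)\subseteq J(R)$; $R$ is feckly clean if every element is feckly clean. *)

(* Defs.v *)
From HB Require Import structures.
From mathcomp Require Import all_boot all_order all_algebra.
Set Implicit Arguments. Unset Strict Implicit. Unset Printing Implicit Defensive.
Import GRing.Theory.
Local Open Scope ring_scope.

Definition left_ideal (R : pzRingType) (I : R -> Prop) : Prop :=
  I 0 /\ (forall x y, I x -> I y -> I (x + y)) /\
  (forall r x, I x -> I (r * x)).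

Definition maximal_left_ideal (R : pzRingType) (I : R -> Prop) : Prop :=
  left_ideal I /\ ~ I 1 /\
  (forall K : R -> Prop, left_ideal K -> ~ K 1 ->
     (forall x, I x -> K x) -> forall x, K x -> I x).

Definition jacobson (R : pzRingType) (x : R) : Prop :=
  forall I : R -> Prop, maximal_left_ideal I -> I x.

(* Two-sided ideal generated by u: finite sums of elements a * u * b. *)
Definition in_RuR (R : pzRingType) (u y : R) : Prop :=
  exists (n : nat) (a b : 'I_n -> R), y = \sum_(i < n) a i * u * b i.

Definition full (R : pzRingType) (u : R) : Prop := forall y : R, in_RuR u y.

Definition feckly_clean_elt (R : pzRingType) (a : R) : Prop :=
  exists e u : R, a = e + u /\ full u /\
    (forall r : R, jacobson (e * r * (1 - e))).

Definition feckly_clean (R : pzRingType) : Prop :=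
  forall a : R, feckly_clean_elt a.

Definition in_xRy (R : pzRingType) (x y z : R) : Prop :=
  exists r : R, z = x * r * y.

(* Main.v *)
Require Import Defs.
From HB Require Import structures.
From mathcomp Require Import all_boot all_order all_algebra.
From Stdlib Require Import Classical.
Import GRing.Theory.
Local Open Scope ring_scope.

Section Aux.
Variable R : pzRingType.

Lemma RuR_mul (u a c d : R) : in_RuR u a -> in_RuR u (c * a * d).
Proof.
move=> [n [A [B ->]]]; exists n, (fun i => c * A i), (fun i => B i * d).
rewrite mulr_sumr mulr_suml; apply: eq_bigr => i _; by rewrite !mulrA.
Qed.

Lemma RuR_add (u a b : R) : in_RuR u a -> in_RuR u b -> in_RuR u (a + b).
Proof.
move=> [n [A [B ->]]] [m [C [D ->]]].
exists (n + m)%N, (fun i => match split i with inl j => A j | inr k => C k end),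
  (fun i => match split i with inl j => B j | inr k => D k end).
rewrite big_split_ord /=; congr (_ + _); apply: eq_bigr => i _.
- by rewrite (unsplitK (inl i)).
- by rewrite (unsplitK (inr i)).
Qed.

Lemma RuR_single (u a b : R) : in_RuR u (a * u * b).
Proof. by exists 1%N, (fun _ => a), (fun _ => b); rewrite big_ord1. Qed.

Lemma RuR_full (u : R) : in_RuR u 1 -> full u.
Proof. by move=> H y; have := @RuR_mul u 1 1 y H; rewrite !mul1r. Qed.

Lemma jac_of (w : R) : (forall t, w * t * w = 0) -> jacobson w.
Proof.
move=> Hw M [[M0 [MD ML]] [M1 Mmax]].
pose K := fun y => exists m t, M m /\ y = m + t * w.
have KL : left_ideal K.
  split; first by exists 0, 0; rewrite mul0r addr0.
  split.
  - move=> y1 y2 [m1 [t1 [Hm1 ->]]] [m2 [t2 [Hm2 ->]]].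
    exists (m1 + m2), (t1 + t2); split; first by apply: MD.
    by rewrite mulrDl addrACA.
  - move=> r y [m [t [Hm ->]]]; exists (r * m), (r * t); split; first by apply: ML.
    by rewrite mulrDr mulrA.
case: (classic (K 1)) => [[m [t [Hm H1]]] | HK1].
- exfalso; apply: M1.
  have -> : 1 = (1 + t * w) * m.
    have -> : m = 1 - t * w by rewrite H1 addrK.
    have H0 : t * w * (t * w) = 0 by rewrite -!mulrA (mulrA w) Hw !mulr0.
    by rewrite mulrBr mulr1 mulrDl mul1r H0 addr0 addrK.
  by apply: ML.
- apply: (Mmax K KL HK1) => [y My|]; first by exists y, 0; rewrite mul0r addr0.
  by exists 0, 1; rewrite mul1r add0r.
Qed.

Lemma key (x e s : R) :
  (forall w : R, w * w = 0 -> forall t, w * t * w = 0) ->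
  e * e = e -> e * (x * x) = 0 -> 1 - e = x * x * s -> full (x - e).
Proof.
move=> P Hee Hex Hf.
set u := x - e.
have Hfe : (1 - e) * e = 0 by rewrite mulrBl mul1r Hee subrr.
have Hef : e * (1 - e) = 0 by rewrite mulrBr mulr1 Hee subrr.
set m := e * x * e.
set z := e * x * (1 - e).
have Hz : z * z = 0.
  by rewrite /z !mulrA -(mulrA (e * x) (1 - e) e) Hfe mulr0 !mul0r.
set q := z * (x * e).
have Hmm : m * m = - q.
  have L : m * m = e * x * e * x * e by rewrite /m !mulrA -(mulrA (e * x) e e) Hee.
  have Z : e * x * x * e = 0 by rewrite -(mulrA e) Hex mul0r.
  by rewrite L /q /z mulrBr mulr1 mulrBl !mulrA Z sub0r opprK.
have Hq : q * q = 0 by rewrite /q mulrA (P z Hz) mul0r.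
have Hm4 : m * m * m * m = 0 by rewrite -[LHS]mulrA Hmm mulrNN Hq.
have Hem : e * m = m by rewrite /m !mulrA Hee.
have Heue : e * u * e = m - e by rewrite /u /m mulrBr mulrBl Hee Hee.
have Hxu : x = u + e by rewrite /u subrK.
clearbody u m q z.
have Id : (e - m) * (1 + m + m * m + m * m * m) = e.
  by rewrite mulrBl !mulrDr !mulr1 !mulrA Hem Hm4 addr0 -(addrA e) -(addrA e) addrK.
have He : in_RuR u e.
  have -> : e = (-e) * u * (e * (1 + m + m * m + m * m * m)).
    by rewrite -{1}Id -[e - m]opprB -Heue !mulNr !mulrA.
  by apply: RuR_single.
have Hx : in_RuR u x.
  rewrite Hxu; apply: RuR_add => //.
  by have := @RuR_single u 1 1; rewrite mul1r mulr1.
have H1e : in_RuR u (1 - e) by rewrite Hf; apply: (@RuR_mul u x x s Hx).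
by apply: RuR_full; rewrite -(subrK e 1); apply: RuR_add.
Qed.
End Aux.

Theorem corollary4p2 (R : pzRingType) :
  (forall x : R, exists n : nat, (2 <= n)%N /\
     (forall z : R, in_xRy x x z <-> in_xRy (x ^+ n) (x ^+ n) z)) ->
  feckly_clean R.
Proof.
move=> H.
have P : forall w : R, w * w = 0 -> forall t, w * t * w = 0.
  move=> w Hw t; have [n [Hn Hz]] := H w.
  have [r ->] := (proj1 (Hz (w * t * w))) (ex_intro _ t erefl).
  have -> : w ^+ n = 0 by rewrite -(subnK Hn) exprD expr2 Hw mulr0.
  by rewrite mulr0.
move=> a.
have [n [Hn Hz]] := H a.
have [r Hr] := (proj1 (Hz (a * 1 * a))) (ex_intro _ 1 erefl).
rewrite mulr1 in Hr.
set s := a ^+ (n - 2) * r * a ^+ (n - 2).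
have Ha2 : a * a = a * a * s * (a * a).
  have E1 : a ^+ n = a * a * a ^+ (n - 2) by rewrite -expr2 -exprD subnKC.
  have E2 : a ^+ n = a ^+ (n - 2) * (a * a) by rewrite -expr2 -exprD subnK.
  by rewrite {1}Hr {1}E1 E2 /s !mulrA.
clearbody s.
set f := a * a * s.
have Hff : f * f = f by rewrite /f mulrA -Ha2.
have Hfa : f * (a * a) = a * a by rewrite /f -Ha2.
have Hfd : f = a * a * s by [].
have F1 : 1 - (1 - f) = f by rewrite opprB addrC subrK.
have Hf1 : f * (1 - f) = 0 by rewrite mulrBr mulr1 Hff subrr.
clearbody f.
exists (1 - f), (a - (1 - f)); split; first by rewrite addrC subrK.
split.
  apply: (@key R a (1 - f) s P).
  - by rewrite mulrBr mulr1 mulrBl mul1r Hff subrr subr0.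
  - by rewrite mulrBl mul1r Hfa subrr.
  - by rewrite F1.
move=> t; apply: jac_of => t'.
apply: P.
by rewrite F1 !mulrA -(mulrA ((1 - f) * t) f (1 - f)) Hf1 mulr0 !mul0r.
Qed.
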